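(* Let $\Gamma$ and $G$ be groups and let $H\le\Gamma\wr G$ be a subgroup such that $\mathrm{pr}(H)=G$ and such that, for some $1\neq g\in G$, $H\cap\Gamma^G$ surjects onto $\Gamma^{\{1,g\}}$ under the restriction map $f\mapsto f|_{\{1,g\}}$. Then for every subgroup $N$ with $[H,H]\le N\le\Gamma\wr G$, the group $N\cap\Gamma^G$ surjects onto $\Gamma^{\{1\}}$ under the restriction map $f\mapsto f|_{\{1\}}$.
   Context: The wreath product is $\Gamma\wr G=\Gamma^G\rtimes G$, where $\Gamma^G$ is the group (pointwise multiplication) of all functions $f\colon G\to\Gamma$, and $G$ acts from the right by $f^h(g)=f(hg)$ for $f\in\Gamma^G$, $g,h\in G$. $\mathrm{pr}\colon\Gamma\wr G\to G$, $(f,g)\mapsto g$, is the canonical projection. For $T\subseteq G$, $\Gamma^T$ denotes the functions $T\to\Gamma$. $[H,H]$ is the commutator subgroup. *)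

(* Defs.v *)
From Stdlib Require Import FunctionalExtensionality.

Set Implicit Arguments.

Record Group := {
  carrier :> Type;
  gmul : carrier -> carrier -> carrier;
  gone : carrier;
  ginv : carrier -> carrier;
  gmulA : forall x y z, gmul x (gmul y z) = gmul (gmul x y) z;
  gmul1 : forall x, gmul gone x = x;
  gmulg1 : forall x, gmul x gone = x;
  gmulV : forall x, gmul (ginv x) x = gone;
  gmulgV : forall x, gmul x (ginv x) = gone
}.

Arguments gmul {g}.
Arguments gone {g}.
Arguments ginv {g}.

(* Elements of the wreath product Gamma wr G: a pair (f, g), read as the
   product f * g, with f in Gamma^G and g in G, where G acts on Gamma^G
   from the right by f^h (x) = f (h x), i.e. g^-1 f g = f^g. *)
Definition wr (Gam G : Group) : Type := ((G -> Gam) * G)%type.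

(* (f1 g1)(f2 g2) = f1 (f2^(g1^-1)) g1 g2 *)
Definition wr_mul (Gam G : Group) (a b : wr Gam G) : wr Gam G :=
  (fun x => gmul (fst a x) (fst b (gmul (ginv (snd a)) x)),
   gmul (snd a) (snd b)).

Definition wr_one (Gam G : Group) : wr Gam G := (fun _ => gone, gone).

(* inverse of f g is g^-1 f^-1 = (f^-1)^(g) g^-1 *)
Definition wr_inv (Gam G : Group) (a : wr Gam G) : wr Gam G :=
  (fun x => ginv (fst a (gmul (snd a) x)), ginv (snd a)).

Definition pr (Gam G : Group) (a : wr Gam G) : G := snd a.

Definition wr_comm (Gam G : Group) (a b : wr Gam G) : wr Gam G :=
  wr_mul (wr_mul (wr_inv a) (wr_inv b)) (wr_mul a b).

Definition is_subgroup (Gam G : Group) (H : wr Gam G -> Prop) : Prop :=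
  H (wr_one Gam G) /\
  (forall a b, H a -> H b -> H (wr_mul a b)) /\
  (forall a, H a -> H (wr_inv a)).

Inductive gen (Gam G : Group) (S : wr Gam G -> Prop) : wr Gam G -> Prop :=
  | gen_in : forall a, S a -> gen S a
  | gen_one : gen S (wr_one Gam G)
  | gen_mul : forall a b, gen S a -> gen S b -> gen S (wr_mul a b)
  | gen_inv : forall a, gen S a -> gen S (wr_inv a).

Definition commutator_subgroup (Gam G : Group) (H : wr Gam G -> Prop)
  : wr Gam G -> Prop :=
  gen (fun c => exists a b, H a /\ H b /\ c = wr_comm a b).

(* membership in H cap Gamma^G: the element f (i.e. (f, 1)) *)
Definition in_base (Gam G : Group) (H : wr Gam G -> Prop) (f : G -> Gam) : Prop :=
  H (f, gone).

(* Main.v *)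
Require Import Defs.

Section L.
Variable Gm : Group.
Lemma inv_uniq (x y : Gm) : gmul x y = gone -> ginv x = y.
Proof.
  intro E. rewrite <- (gmulg1 _ (ginv x)), <- E, gmulA, gmulV, gmul1. reflexivity.
Qed.
Lemma ginv1 : ginv (@gone Gm) = gone.
Proof. apply inv_uniq, gmul1. Qed.
Lemma ginvK (x : Gm) : ginv (ginv x) = x.
Proof. apply inv_uniq, gmulV. Qed.
Lemma ginvM (x y : Gm) : ginv (gmul x y) = gmul (ginv y) (ginv x).
Proof.
  apply inv_uniq. rewrite gmulA, <- (gmulA _ x y), gmulgV, gmulg1, gmulgV. reflexivity.
Qed.
End L.

Theorem lemma4p11 (Gam G : Group) (H : wr Gam G -> Prop) :
  is_subgroup H ->
  (* pr(H) = G *)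
  (forall g : G, exists a, H a /\ pr a = g) ->
  (* for some g <> 1, H cap Gamma^G surjects onto Gamma^{1,g} *)
  (exists g : G, g <> gone /\
     forall u v : Gam, exists f : G -> Gam,
       in_base H f /\ f gone = u /\ f g = v) ->
  forall N : wr Gam G -> Prop,
    is_subgroup N ->
    (forall a, commutator_subgroup H a -> N a) ->
    (* N cap Gamma^G surjects onto Gamma^{1} *)
    forall u : Gam, exists f : G -> Gam, in_base N f /\ f gone = u.
Proof.
  intros _ Hpr [g [_ Hg]] N _ HN u.
  destruct (Hpr g) as [[phi x] [Hh Hx]]. unfold pr in Hx; simpl in Hx; subst x.
  destruct (Hg gone (gmul (phi g) (gmul u (ginv (phi g))))) as [k [Hk [Hk1 Hkg]]].
  set (c := wr_comm (k, gone) (phi, g)).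
  assert (Nc : N c).
  { apply HN. apply gen_in. exists (k, gone), (phi, g). repeat split; assumption. }
  assert (Sc : snd c = gone).
  { unfold c, wr_comm, wr_mul, wr_inv; simpl.
    rewrite ginv1, !gmul1, gmulV. reflexivity. }
  exists (fst c). split.
  - unfold in_base. rewrite <- Sc. destruct c; exact Nc.
  - unfold c, wr_comm, wr_mul, wr_inv; simpl.
    rewrite ginv1, !gmul1, !gmulg1, ginvK, Hk1, ginv1, gmul1, Hkg.
    rewrite <- !gmulA, ginv1, gmulg1, gmulV, gmulg1, gmulA, gmulV, gmul1. reflexivity.
Qed.
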